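(* Let $G$ be a connected graph and $K\subseteq V(G)$ a nonempty set of vertices inducing a clique in $G$, and let $G_K$ be obtained from $G$ by adding a new vertex $x$ with $N_{G_K}(x)=K$. Let $\mathcal{R}_0=\{T(0,x,v_{\lambda(T)})\mid T\in V(\mathcal{R}(G))\}$ and $\mathcal{R}_1=\{T(\lambda(T)+1,x,v_{\lambda(T)})\mid T\in V(\mathcal{R}(G))\}$. Then $\mathcal{R}_0$ and $\mathcal{R}_1$ each induce a subgraph of $\mathcal{R}(G_K)$ isomorphic to $\mathcal{R}(G)$.
   Context: For a connected graph $G$, a search tree on $G$ is a rooted tree with vertex set $V(G)$ defined recursively: its root is some vertex $r\in V(G)$, and the children of $r$ are the roots of search trees on the connected components of $G-r$. For a rooted tree $T$ and $w\in V(T)$, $T|w$ denotes the subtree rooted at $w$. Let $T$ be a search tree on $G$, let $v$ be a child of $u$ in $T$, and let $p$ be the parent of $u$ (if it exists). The $uv$-rotation transforms $T$ into the search tree $T'$ in which: $u$ is a child of $v$ and $v$ is a child of $p$ (or $v$ is the root if $u$ was the root); every subtree of $u$ in $T$ other than $T|v$ is a subtree of $u$ in $T'$; and every subtree $S$ of $v$ in $T$ is a subtree of $u$ in $T'$ if $u$ is adjacent in $G$ to some vertex of $S$, and a subtree of $v$ in $T'$ otherwise. The rotation graph $\mathcal{R}(G)$ is the graph whose vertices are the search trees on $G$, two being adjacent iff they differ by one rotation. For a rooted tree $T$ with root $r_T$ and $w\in V(T)$, $d_{T,w}$ is the distance from $r_T$ to $w$. For a search tree $T$ on $G$, $\lambda(T)=\max\{d_{T,u}\mid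 u\in K\}$ and $v_{\lambda(T)}$ is the unique vertex of $K$ at depth $\lambda(T)$ (vertices of a clique lie on a common root-to-leaf path). Insertion: for a rooted tree $T$, $v\in V(T)$ with $d=d_{T,v}$ and root-to-$v$ path $a_0,\ldots,a_d=v$, and $x\notin V(T)$: $T(0,x,v)$ has $x$ as new root with $T$ as its only subtree; for $1\le i\le d$, $T(i,x,v)$ subdivides the edge $a_{i-1}a_i$ by $x$; $T(d+1,x,v)$ adds $x$ as a new leaf child of $v$. *)

(* Defs.v *)
From mathcomp Require Import all_boot.
Set Implicit Arguments.
Unset Strict Implicit.
Unset Printing Implicit Defensive.

(* A graph is a relation [g : rel V] on a finite vertex type [V]
   (assumed symmetric and irreflexive in the theorem). *)

(* A rooted tree on vertex set V is encoded by its parent function: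
   [T w = None] iff w is the root, [T w = Some p] iff p is the parent of w. *)
Definition ptree (V : finType) := {ffun V -> option V}.

Definition up (V : finType) (T : ptree V) (k : nat) (v : V) : option V :=
  iter k (fun o => obind (fun w => T w) o) (Some v).

Definition rooted_at (V : finType) (T : ptree V) (r : V) : Prop :=
  T r = None /\ forall v, exists k, up T k v = Some r.

Definition desc (V : finType) (T : ptree V) (w : V) : {set V} :=
  [set y | [exists k : 'I_#|V|.+1, up T k y == Some w]].

Definition depth (V : finType) (T : ptree V) (v : V) : nat :=
  find (fun k => up T k.+1 v == None) (iota 0 #|V|).

Definition induced (V : finType) (g : rel V) (S : {set V}) : rel V :=
  [rel a b | [&& g a b, a \in S & b \in S]].

Definition component (V : finType) (g : rel V) (S C : {set V}) : Prop :=
  [/\ C != set0, C \subset S,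
      (forall a b, a \in C -> b \in C -> connect (induced g C) a b) &
      (forall a b, a \in C -> b \in S -> g a b -> b \in C)].

Inductive st_at (V : finType) (g : rel V) (T : ptree V) : V -> Prop :=
  StAt r : (forall c, T c = Some r ->
              component g (desc T r :\ r) (desc T c) /\ st_at g T c) ->
           st_at g T r.

Definition search_tree (V : finType) (g : rel V) (T : ptree V) : Prop :=
  exists r, rooted_at T r /\ st_at g T r.

(* The uv-rotation of T (v a child of u). *)
Definition rotate (V : finType) (g : rel V) (T : ptree V) (u v : V) : ptree V :=
  [ffun w => if w == u then Some v
             else if w == v then T u
             else if (T w == Some v) && [exists y in desc T w, g u y] then Some u
             else T w].

Definition rot_adj (V : finType) (g : rel V) (T1 T2 : ptree V) : Prop :=
  [/\ search_tree g T1, search_tree g T2 &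
      exists u v, (T1 v = Some u /\ T2 = rotate g T1 u v) \/
                  (T2 v = Some u /\ T1 = rotate g T2 u v)].

(* G_K: new vertex x = None with neighbourhood K *)
Definition gK (V : finType) (g : rel V) (K : {set V}) : rel (option V) :=
  fun a b => match a, b with
             | Some a, Some b => g a b
             | None, Some b => b \in K
             | Some a, None => a \in K
             | None, None => false
             end.

(* Insertion T(i, x, v) of x = None, with a_j = up T (d - j) v, d = depth T v. *)
Definition insert (V : finType) (T : ptree V) (i : nat) (v : V) : ptree (option V) :=
  [ffun w => match w with
             | None => if i == 0 then None
                       else omap Some (up T ((depth T v).+1 - i) v)
             | Some w => if (i <= depth T v) && (up T (depth T v - i) v == Some w)
                         then Some None else omap Some (T w)
             end].

Definition lam (V : finType) (K : {set V}) (T : ptree V) : nat :=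
  \max_(u in K) depth T u.

(* R_0 and R_1; v ranges over the vertex v_lambda(T) of K of depth lambda(T) *)
Definition R0 (V : finType) (g : rel V) (K : {set V}) (T' : ptree (option V)) : Prop :=
  exists T, search_tree g T /\
    exists v, [/\ v \in K, depth T v = lam K T & T' = insert T 0 v].

Definition R1 (V : finType) (g : rel V) (K : {set V}) (T' : ptree (option V)) : Prop :=
  exists T, search_tree g T /\
    exists v, [/\ v \in K, depth T v = lam K T & T' = insert T (lam K T).+1 v].

Definition induces_copy (V W : finType) (g : rel V) (h : rel W)
    (R : ptree W -> Prop) : Prop :=
  (forall T', R T' -> search_tree h T') /\
  exists f : ptree V -> ptree W,
    [/\ forall T, search_tree g T -> R (f T),
        forall T1 T2, search_tree g T1 -> search_tree g T2 -> f T1 = f T2 -> T1 = T2,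
        forall T', R T' -> exists2 T, search_tree g T & f T = T' &
        forall T1 T2, search_tree g T1 -> search_tree g T2 ->
          (rot_adj g T1 T2 <-> rot_adj h (f T1) (f T2))].

(* Main.v *)
Require Import Defs.
From mathcomp Require Import all_boot zify.
Set Implicit Arguments. Unset Strict Implicit. Unset Printing Implicit Defensive.

Section Up.
Variable V : finType.
Implicit Types (T : ptree V).

Lemma upS T k v : up T k.+1 v = obind T (up T k v).
Proof. by []. Qed.

Lemma up0 T v : up T 0 v = Some v.
Proof. by []. Qed.

Lemma upD T m n v : up T (m + n) v = obind (up T m) (up T n v).
Proof.
elim: m => [|m IH]; first by rewrite add0n; case: (up T n v).
by rewrite addSn upS IH; case: (up T n v).
Qed.

Lemma upS' T k v : up T k.+1 v = obind (up T k) (T v).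
Proof. by rewrite -addn1 upD. Qed.

Lemma up_none T k m v : up T k v = None -> k <= m -> up T m v = None.
Proof. by move=> H /subnK <-; rewrite upD H. Qed.

Lemma up_short T k v y : up T k v = y -> exists2 k', k' <= #|V| & up T k' v = y.
Proof.
move=> H.
pose F := fun o : option V => obind T o.
have Hit : forall n, up T n v = iter n F (Some v) by [].
have Hc : fconnect F (Some v) y by rewrite -H Hit; apply: fconnect_iter.
exists (findex F (Some v) y); last by rewrite Hit iter_findex.
rewrite -ltnS; apply: leq_trans (findex_max Hc) _.
by rewrite /order -card_option max_card.
Qed.

Lemma mem_desc T w y : (y \in desc T w) <-> exists k, up T k y = Some w.
Proof.
rewrite inE; split.
  by case/existsP => k /eqP H; exists k.
case=> k /up_short [k' Hk' H]; apply/existsP.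
by exists (Ordinal (n:=#|V|.+1) (m:=k') (Hk' : k' < #|V|.+1)); apply/eqP.
Qed.

Lemma find_iota (p : pred nat) n k : k < n -> p k -> (forall j, j < k -> ~~ p j) ->
  find p (iota 0 n) = k.
Proof.
move=> kn pk hj.
have hs : has p (iota 0 n) by apply/hasP; exists k => //; rewrite mem_iota.
have := hs; rewrite has_find size_iota => fn.
have := nth_find 0 hs; rewrite nth_iota // add0n => pf.
case: (ltngtP (find p (iota 0 n)) k) => // H.
  by have := hj _ H; rewrite pf.
by have := before_find 0 H; rewrite nth_iota // add0n pk.
Qed.

End Up.

Section Tree.
Variable V : finType.
Variable T : ptree V.
Variable r : V.
Hypothesis HT : rooted_at T r.

Lemma Tr : T r = None. Proof. by case: HT. Qed.

Lemma root_none w : T w = None -> w = r.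
Proof.
move=> Hw; case: HT => _ /(_ w) [[|k]]; first by case.
by rewrite upS' Hw.
Qed.

Lemma depth_spec k v : up T k v = Some r -> depth T v = k.
Proof.
move=> Hk.
have Hk1 : up T k.+1 v = None by rewrite upS Hk /= Tr.
rewrite /depth; apply: find_iota.
- have [k' Hk' Hn] := up_short Hk1.
  case: (ltnP k k') => [Hl|Hkk]; first exact: leq_trans Hl Hk'.
  by have := up_none Hn Hkk; rewrite Hk.
- by apply/eqP.
- move=> j Hj; apply/negP => /eqP Hn.
  by have := up_none Hn Hj; rewrite Hk.
Qed.

Lemma depth_root v : up T (depth T v) v = Some r.
Proof.
case: HT => _ /(_ v) [k Hk]; by rewrite (depth_spec Hk).
Qed.

Lemma depth_up k x y : up T k x = Some y -> depth T x = depth T y + k.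
Proof.
move=> H; apply: depth_spec; by rewrite upD H /= depth_root.
Qed.

Lemma up_uniq k1 k2 x y1 y2 : up T k1 x = Some y1 -> up T k2 x = Some y2 ->
  y1 = y2 -> k1 = k2.
Proof.
move=> H1 H2 E; subst; have := depth_up H1; rewrite (depth_up H2).
by move/eqP; rewrite eqn_add2l => /eqP.
Qed.

Lemma desc_root y : y \in desc T r.
Proof. by apply/mem_desc; case: HT => _ /(_ y). Qed.

Lemma desc_antisym a b : a \in desc T b -> b \in desc T a -> a = b.
Proof.
move=> /mem_desc [k1 H1] /mem_desc [k2 H2].
have := depth_up H1; rewrite (depth_up H2) -addnA.
move/eqP; rewrite -{1}[depth T a]addn0 eqn_add2l eq_sym addn_eq0 => /andP[/eqP E _].
by move: H2; rewrite E => -[].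
Qed.

Lemma desc_refl a : a \in desc T a.
Proof. by apply/mem_desc; exists 0. Qed.

Lemma desc_depth a b : a \in desc T b -> a != b -> depth T b < depth T a.
Proof.
move=> /mem_desc [[|k] H]; first by move: H => [->]; rewrite eqxx.
by rewrite (depth_up H) => _; rewrite addnS ltnS leq_addr.
Qed.

Lemma desc_child a c : a \in desc T c -> a != c ->
  exists2 d, T d = Some c & a \in desc T d.
Proof.
move=> /mem_desc [[|k] H]; first by move: H => [->]; rewrite eqxx.
move: H; rewrite upS; case E: (up T k a) => [d|] //= Hd _.
by exists d => //; apply/mem_desc; exists k.
Qed.

Lemma up_chain k1 k2 z a c : up T k1 z = Some a -> up T k2 z = Some c -> k1 <= k2 ->
  up T (k2 - k1) a = Some c.
Proof. by move=> H1 H2 /subnK E; rewrite -H2 -{2}E upD H1. Qed.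

Lemma desc_trans a b c : a \in desc T b -> b \in desc T c -> a \in desc T c.
Proof.
move=> /mem_desc [k1 H1] /mem_desc [k2 H2]; apply/mem_desc; exists (k2 + k1).
by rewrite upD H1.
Qed.

Lemma desc_parent a p : T a = Some p -> p \in desc T a -> False.
Proof.
move=> H /desc_antisym E.
have Hd : a \in desc T p by apply/mem_desc; exists 1.
have := E Hd => Ep; move: H; rewrite Ep => H.
have := @depth_up 1 a a H; rewrite addn1; lia.
Qed.

End Tree.

Lemma st_inv (V : finType) (g : rel V) T c : st_at g T c ->
  forall d, T d = Some c -> component g (desc T c :\ c) (desc T d) /\ st_at g T d.
Proof. by case. Qed.

Section ST.
Variable V : finType.
Variable g : rel V.
Variable T : ptree V.
Variable r : V.
Hypothesis HT : rooted_at T r.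
Hypothesis HS : st_at g T r.

Lemma st_all c : st_at g T c.
Proof.
case: HT => _ /(_ c) [k]; elim: k c => [|k IH] c.
  move=> [->]. exact HS.
rewrite upS'. case E: (T c) => [p|]; last by [].
move=> /= Hp.
exact: (st_inv (IH p Hp) E).2.
Qed.

Lemma comp_child d c : T d = Some c -> component g (desc T c :\ c) (desc T d).
Proof. move=> E; exact: (st_inv (st_all c) E).1. Qed.

Lemma tree_ind (P : V -> Prop) :
  (forall c, (forall d, T d = Some c -> P d) -> P c) -> forall c, P c.
Proof.
move=> IH c.
suff : forall n c, #|desc T c| <= n -> P c by apply; apply: leqnn.
elim=> [|n IHn] {}c Hc.
  have : 0 < #|desc T c| by apply/card_gt0P; exists c; apply: desc_refl.
  lia.
apply: IH => d Hd; apply: IHn.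
  case: (comp_child Hd) => _ Hsub _ _.
  rewrite -ltnS; apply: leq_trans Hc; apply: leq_ltn_trans (subset_leq_card Hsub) _.
  by rewrite (cardsD1 c (desc T c)) (desc_refl T c) add1n.
Qed.

Lemma st_comparable a b : g a b -> a \in desc T b \/ b \in desc T a.
Proof.
suff H : forall c a b, a \in desc T c -> b \in desc T c -> g a b ->
   a \in desc T b \/ b \in desc T a.
  by move=> gab; apply: (H r _ _ (desc_root HT a) (desc_root HT b) gab).
elim/tree_ind => c IH {}a {}b ac bc gab.
case: (eqVneq a c) => [->|nac]; first by right.
case: (eqVneq b c) => [->|nbc]; first by left.
have [d Hd ad] := desc_child ac nac.
case: (comp_child Hd) => _ _ _ /(_ a b ad) Hcl.
apply: (IH d Hd) => //; apply: Hcl gab.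
by rewrite in_setD1 nbc.
Qed.

End ST.

Section P0.
Variable V : finType.
Variable g : rel V.
Variable K : {set V}.
Implicit Types (T : ptree V).

Definition F0 T : ptree (option V) :=
  [ffun o => if o is Some w then (if T w is Some p then Some (Some p) else Some None) else None].

Lemma F0S T w : F0 T (Some w) = if T w is Some p then Some (Some p) else Some None.
Proof. by rewrite ffunE. Qed.
Lemma F0N T : F0 T None = None.
Proof. by rewrite ffunE. Qed.

Lemma up_F0 T k y a : up (F0 T) k (Some y) = Some (Some a) <-> up T k y = Some a.
Proof.
elim: k a => [|k IH] a; first by split => -[->].
rewrite !upS; split.
  case E: (up (F0 T) k (Some y)) => [[b|]|] //=; last by rewrite F0N.
  move: E => /IH -> /=; rewrite F0S; by case: (T b) => // p [->].
case E: (up T k y) => [b|] //= Hb.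
by have := (IH b).2 E => -> /=; rewrite F0S Hb.
Qed.

Lemma up_F0N T k w : up (F0 T) k None <> Some (Some w).
Proof. case: k => [|k]; first by []. by rewrite upS' F0N. Qed.

Lemma desc_F0 T w o : (o \in desc (F0 T) (Some w)) = (if o is Some y then y \in desc T w else false).
Proof.
case: o => [y|].
  apply/idP/idP => /mem_desc [k Hk]; apply/mem_desc; exists k; by apply/up_F0.
by apply/negP => /mem_desc [k /up_F0N].
Qed.

Lemma ex_F0 T w u : [exists y in desc (F0 T) (Some w), gK g K (Some u) y] =
   [exists y in desc T w, g u y].
Proof.
apply/existsP/existsP => [[[y|]]|[y]]; rewrite ?desc_F0 //.
  by move=> H; exists y.
by move=> H; exists (Some y); rewrite desc_F0.
Qed.

Lemma rot_F0 T u v : F0 (rotate g T u v) = rotate (gK g K) (F0 T) (Some u) (Some v).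
Proof.
apply/ffunP => [[w|]]; rewrite /rotate !ffunE /=; last by [].
have EX := ex_F0 T w u; rewrite /= in EX; rewrite EX {EX}.
case: (eqVneq w u) => [->|nwu]; first by rewrite !eqxx.
have nwu' : (Some w == Some u) = false by apply/negbTE; rewrite (inj_eq (@Some_inj _)).
case: (eqVneq w v) => [E|nwv].
  subst w; rewrite nwu' ?(negbTE nwu) ?eqxx; by case: (T u).
have nwv' : (Some w == Some v) = false by apply/negbTE; rewrite (inj_eq (@Some_inj _)).
rewrite nwu' nwv' /=.
case: (T w) => [p|] //=.
case: (eqVneq p v) => [->|npv]; first by rewrite !eqxx; case: ifP.
have npv' : (Some (Some p) == Some (Some v)) = false by apply/negbTE; rewrite !(inj_eq (@Some_inj _)).
by rewrite npv' ?(inj_eq (@Some_inj _)) (negbTE npv).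
Qed.

Lemma F0_inj T1 T2 : F0 T1 = F0 T2 -> T1 = T2.
Proof.
move=> E; apply/ffunP => w; have := congr1 (fun f : ptree (option V) => f (Some w)) E; rewrite /= !F0S.
by case: (T1 w) => [?|]; case: (T2 w) => [?|] // [->].
Qed.

End P0.

Lemma connect_map (A B : finType) (e : rel A) (e' : rel B) (h : A -> B) :
  (forall x y, e x y -> e' (h x) (h y)) -> forall x y, connect e x y -> connect e' (h x) (h y).
Proof.
move=> He x y /connectP [p pth ->]; elim: p x pth => [|z p IH] x /=; first by rewrite connect0.
case/andP => exz /IH; apply: connect_trans; apply: connect1; exact: He.
Qed.

Section R0.
Variable V : finType.
Variable g : rel V.
Variable K : {set V}.
Hypothesis conn : forall a b, connect g a b.

Lemma comp_lift (S C : {set V}) (S' C' : {set option V}) :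
  (forall y, (Some y \in S') = (y \in S)) -> None \notin S' ->
  (forall y, (Some y \in C') = (y \in C)) -> None \notin C' ->
  component g S C -> component (gK g K) S' C'.
Proof.
move=> HS NS HC NC [ne sub con cl]; split.
- case/set0Pn: ne => c cC; apply/set0Pn; exists (Some c); by rewrite HC.
- apply/subsetP => [[y|]]; last by rewrite (negbTE NC).
  by rewrite HC HS => /(subsetP sub).
- move=> [a|] [b|]; rewrite ?(negbTE NC) // !HC => aC bC.
  have := con a b aC bC; apply: connect_map => x y /=.
  by rewrite /induced /= !HC.
- move=> [a|] [b|]; rewrite ?(negbTE NC) ?(negbTE NS) // HC HS => aC bS /=.
  by rewrite HC; apply: cl.
Qed.

Lemma F0_insert (T : ptree V) (r v : V) : rooted_at T r -> insert T 0 v = F0 T.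
Proof.
move=> HT; apply/ffunP => [[w|]]; rewrite !ffunE //= subn0 (depth_root HT).
case: (eqVneq (Some r) (Some w)) => [[<-]|nrw] /=; first by rewrite (Tr HT).
case E: (T w) => [p|] //=.
by move: nrw; rewrite (root_none HT E) eqxx.
Qed.

Lemma F0_rooted (T : ptree V) (r : V) : rooted_at T r -> rooted_at (F0 T) None.
Proof.
move=> HT; split; first by rewrite F0N.
move=> [w|]; last by exists 0.
case: HT => Tr' /(_ w) [k Hk]; exists k.+1.
rewrite upS (proj2 (up_F0 T k w r) Hk) /=. by rewrite F0S Tr'.
Qed.

Lemma F0_search (T : ptree V) : search_tree g T -> search_tree (gK g K) (F0 T).
Proof.
case=> r [HT HS]; exists None; split; first exact: F0_rooted HT.
have HT0 := F0_rooted HT.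
have Hsome : forall c, st_at (gK g K) (F0 T) (Some c).
  elim/(tree_ind HT HS) => c IH; constructor => [[d|]]; last by rewrite F0N; congruence.
  rewrite F0S; case E: (T d) => [p|]; last congruence.
  move=> [Epc]; subst p; split; last exact: IH.
  apply: (comp_lift (S := desc T c :\ c) (C := desc T d) _ _ _ _ (comp_child HT HS E)).
  - by move=> y; rewrite !in_setD1 desc_F0 (inj_eq (@Some_inj _)).
  - by rewrite in_setD1 desc_F0 andbF.
  - by move=> y; rewrite desc_F0.
  - by rewrite desc_F0.
constructor => [[d|]]; last by rewrite F0N; congruence.
rewrite F0S; case E: (T d) => [p|]; first congruence.
move=> _; split; last exact: Hsome.
have Edr := root_none HT E; subst d.
apply: (comp_lift (S := setT) (C := setT)).
- move=> y; rewrite in_setD1 in_setT /=; exact: desc_root HT0 _.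
- by rewrite in_setD1 eqxx.
- by move=> y; rewrite desc_F0 in_setT; exact: desc_root HT _.
- by rewrite desc_F0.
split.
- by apply/set0Pn; exists r; rewrite in_setT.
- exact: subsetT.
- move=> a b _ _; have := conn a b; apply: connect_map => x y /=.
  by rewrite /induced /= !in_setT !andbT.
- by move=> a b _ _ _; rewrite in_setT.
Qed.

End R0.

Lemma par_desc (V : finType) (T : ptree V) x y : T x = Some y -> x \in desc T y.
Proof. by move=> H; apply/mem_desc; exists 1. Qed.

Section Rot.
Variable V : finType.
Variable g : rel V.
Variables (T1 : ptree V) (r u v : V).
Hypothesis HT : rooted_at T1 r.
Hypothesis Hvu : T1 v = Some u.
Let T2 := rotate g T1 u v.

Lemma dvu : depth T1 v = (depth T1 u).+1.
Proof. by rewrite (@depth_up _ _ _ HT 1 v u Hvu) addn1. Qed.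

Lemma R_u : T2 u = Some v.
Proof. by rewrite /T2 /rotate ffunE eqxx. Qed.

Lemma nuv : u != v.
Proof. by apply/eqP => E; have := dvu; rewrite E; lia. Qed.

Lemma R_v : T2 v = T1 u.
Proof. by rewrite /T2 /rotate ffunE eq_sym (negbTE nuv) eqxx. Qed.

Lemma R_o w : w != u -> w != v ->
  T2 w = if (T1 w == Some v) && [exists y in desc T1 w, g u y] then Some u else T1 w.
Proof. by move=> /negbTE wu /negbTE wv; rewrite /T2 /rotate ffunE wu wv. Qed.

Lemma R_same w : w != u -> w != v -> T1 w != Some v -> T2 w = T1 w.
Proof. by move=> wu wv /negbTE wp; rewrite R_o // wp. Qed.

Lemma Q p : T1 u = Some p -> forall k a, up T1 k p = Some a -> up T2 k p = Some a.
Proof.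
move=> Hp; have du := @depth_up _ _ _ HT 1 u p Hp.
elim=> [|k IH] a //.
rewrite !upS; case E: (up T1 k p) => [b|] //= Hb.
rewrite (IH b E) /=; have db := depth_up HT E.
have dab := @depth_up _ _ _ HT 1 b a Hb.
rewrite R_same //.
- by apply/eqP => Ebu; move: db; rewrite Ebu; lia.
- by apply/eqP => Ebv; move: db; rewrite Ebv dvu; lia.
- apply/eqP => Ebv; have := @depth_up _ _ _ HT 1 b v Ebv; rewrite dvu; lia.
Qed.

Lemma anc_u j a : up T1 j.+1 u = Some a -> v \in desc T2 a.
Proof.
rewrite upS'; case Ep: (T1 u) => [p|] //= H.
apply/mem_desc; exists j.+1; by rewrite upS' R_v Ep /= (Q Ep H).
Qed.

Lemma anc_v k a : up T1 k.+2 v = Some a -> v \in desc T2 a.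
Proof. rewrite upS' Hvu /=; exact: anc_u. Qed.

Lemma P1 z : z \notin desc T1 v -> forall k a, up T1 k z = Some a -> z \in desc T2 a.
Proof.
move=> zv; elim=> [|k IH] a; first by move=> [->]; apply/mem_desc; exists 0.
rewrite upS; case E: (up T1 k z) => [b|] //= Hb.
have zb := IH b E.
have nbv : b != v by apply/eqP => Ebv; move: zv; rewrite -Ebv; move/negP; apply; apply/mem_desc; exists k.
have nbp : T1 b != Some v.
  apply/eqP => Ebv; move: zv => /negP; apply; apply/mem_desc; exists k.+1; by rewrite upS E.
case: (eqVneq b u) => [Ebu|nbu].
  subst b; apply: (desc_trans zb); apply: (desc_trans (par_desc R_u)).
  by apply: par_desc; rewrite R_v.
by apply: (desc_trans zb); apply: par_desc; rewrite R_same.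
Qed.

Lemma P2 c z : T1 c = Some v -> forall k a, up T1 k z = Some a -> a \in desc T1 c ->
  up T2 k z = Some a.
Proof.
move=> Hc; have dc := @depth_up _ _ _ HT 1 c v Hc.
elim=> [|k IH] a //.
rewrite !upS; case E: (up T1 k z) => [b|] //= Hb ac.
have bc : b \in desc T1 c by apply: desc_trans (par_desc Hb) ac.
rewrite (IH b E bc) /=.
have := mem_desc T1 c b; case=> /(_ bc) [kb Hkb] _.
have db := depth_up HT Hkb.
rewrite R_same //.
- by apply/eqP => Ebu; move: db; rewrite Ebu dvu in dc *; lia.
- by apply/eqP => Ebv; move: db; rewrite Ebv; lia.
- apply/eqP => Ebv; move: Hb; rewrite Ebv => -[Eva]; subst a.
  exact: (desc_parent HT Hc ac).
Qed.

End Rot.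

Section R1.
Variable V : finType.
Variable g : rel V.
Variable K : {set V}.
Hypothesis conn : forall a b, connect g a b.
Hypothesis Kne : K != set0.
Hypothesis cliq : {in K &, forall a b, a != b -> g a b}.
Implicit Types (T : ptree V).

Definition vl T : option V := [pick u in K | depth T u == lam K T].

Definition F1 T : ptree (option V) :=
  [ffun o => if o is Some w then omap Some (T w) else omap Some (vl T)].

Lemma F1S T w : F1 T (Some w) = omap Some (T w).
Proof. by rewrite ffunE. Qed.
Lemma F1N T : F1 T None = omap Some (vl T).
Proof. by rewrite ffunE. Qed.

Lemma vl_some T : exists v, vl T = Some v.
Proof.
have [i0 iK Hi] : {i0 | i0 \in K & lam K T = depth T i0}.
  apply: eq_bigmax_cond; by rewrite card_gt0.
rewrite /vl; case: pickP => [x _|H]; first by exists x.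
by have := H i0; rewrite iK Hi eqxx.
Qed.

Lemma vl_spec T v : vl T = Some v -> v \in K /\ depth T v = lam K T.
Proof.
rewrite /vl; case: pickP => [x /andP [xK /eqP dx] [<-]|//]; by [].
Qed.

Lemma lam_ge T a : a \in K -> depth T a <= lam K T.
Proof. move=> aK; rewrite /lam; exact: leq_bigmax_cond. Qed.

Lemma below_vl T r v b : rooted_at T r -> vl T = Some v -> b \in K -> b \in desc T v -> b = v.
Proof.
move=> HT /vl_spec [vK dv] bK bv; apply/eqP/negPn/negP => nbv.
have := desc_depth HT bv nbv; have := lam_ge T bK; rewrite dv; lia.
Qed.

Lemma vl_prop T v : search_tree g T -> vl T = Some v ->
  v \in K /\ forall a, a \in K -> v \in desc T a.
Proof.
case=> r [HT HS] Hv; have [vK dv] := vl_spec Hv; split => // a aK.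
case: (eqVneq a v) => [->|nav]; first exact: desc_refl.
case: (st_comparable HT HS (cliq aK vK nav)) => // av.
by move: nav; rewrite (below_vl HT Hv aK av) eqxx.
Qed.

Lemma vl_char T z : search_tree g T -> z \in K -> (forall a, a \in K -> z \in desc T a) ->
  vl T = Some z.
Proof.
move=> HST zK Hz; have [v Hv] := vl_some T; rewrite Hv.
have [vK Hv'] := vl_prop HST Hv.
case: HST => r [HT _]; congr Some; apply: (desc_antisym HT); [exact: Hv' | exact: Hz].
Qed.

Lemma vl_unique T v : search_tree g T -> v \in K -> depth T v = lam K T -> vl T = Some v.
Proof.
move=> HST vK dv; apply: vl_char => // a aK.
have [r [HT HS]] := HST.
case: (eqVneq a v) => [->|nav]; first exact: desc_refl.
case: (st_comparable HT HS (cliq aK vK nav)) => // av.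
have := desc_depth HT av nav; have := lam_ge T aK; rewrite dv; lia.
Qed.

Lemma F1_insert T v : vl T = Some v -> insert T (lam K T).+1 v = F1 T.
Proof.
move=> Hv; have [_ dv] := vl_spec Hv.
apply/ffunP => [[w|]]; rewrite !ffunE /= dv; first by rewrite ltnn.
by rewrite subnn Hv.
Qed.

Lemma up_F1 T k y : up (F1 T) k (Some y) = omap Some (up T k y).
Proof.
elim: k => [|k IH] //; rewrite !upS IH; case: (up T k y) => //= b; by rewrite F1S.
Qed.

Lemma desc_F1S T w y : (Some y \in desc (F1 T) (Some w)) = (y \in desc T w).
Proof.
apply/idP/idP => /mem_desc [k Hk]; apply/mem_desc; exists k.
  by move: Hk; rewrite up_F1; case: (up T k y) => //= ? [->].
by rewrite up_F1 Hk.
Qed.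

Lemma desc_F1N T v w : vl T = Some v -> (None \in desc (F1 T) (Some w)) = (v \in desc T w).
Proof.
move=> Hv; apply/idP/idP => /mem_desc [k Hk]; apply/mem_desc.
  case: k Hk => [|k] //; rewrite upS' F1N Hv /= up_F1 => Hk; exists k.
  by move: Hk; case: (up T k v) => //= ? [->].
by exists k.+1; rewrite upS' F1N Hv /= up_F1 Hk.
Qed.

Lemma desc_F1None T o : (o \in desc (F1 T) None) = (o == None).
Proof.
case: o => [y|]; last by rewrite eqxx; apply/mem_desc; exists 0.
apply/negP => /mem_desc [k]; rewrite up_F1; by case: (up T k y).
Qed.

End R1.

Section R1b.
Variable V : finType.
Variable g : rel V.
Variable K : {set V}.
Hypothesis conn : forall a b, connect g a b.
Hypothesis Kne : K != set0.
Hypothesis cliq : {in K &, forall a b, a != b -> g a b}.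
Implicit Types (T : ptree V).

Lemma comp_lift1 (S C : {set V}) (S' C' : {set option V}) (v : V) :
  (forall y, (Some y \in S') = (y \in S)) -> (forall y, (Some y \in C') = (y \in C)) ->
  v \in K -> ((None \in C') -> v \in C) -> ((None \in C') -> None \in S') ->
  ((None \in C') -> forall b, b \in S -> b \in K -> b \in C) ->
  ((None \in S') -> forall a, a \in C -> a \in K -> None \in C') ->
  component g S C -> component (gK g K) S' C'.
Proof.
move=> HS HC vK h1 h2 h3 h4 [ne sub con cl].
have lift : forall a b, a \in C -> b \in C -> connect (induced (gK g K) C') (Some a) (Some b).
  move=> a b aC bC; have := con a b aC bC; apply: connect_map => x y /=.
  by rewrite /induced /= !HC.
split.
- case/set0Pn: ne => c cC; apply/set0Pn; exists (Some c); by rewrite HC.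
- apply/subsetP => [[y|]]; last exact: h2.
  by rewrite HC HS => /(subsetP sub).
- move=> [a|] [b|]; rewrite ?HC.
  + exact: lift.
  + move=> aC NC; apply: connect_trans (lift a v aC (h1 NC)) _.
    by apply: connect1; rewrite /induced /= vK HC (h1 NC) NC.
  + move=> NC bC; apply: connect_trans (lift v b (h1 NC) bC).
    by apply: connect1; rewrite /induced /= vK HC (h1 NC) NC.
  + by move=> _ _; apply: connect0.
- move=> [a|] [b|]; rewrite ?HC ?HS /=.
  + exact: cl.
  + move=> aC NS aK. exact: (h4 NS a aC aK).
  + move=> NC bS bK. exact: (h3 NC b bS bK).
  + by [].
Qed.

Lemma F1_rooted T r : rooted_at T r -> rooted_at (F1 K T) (Some r).
Proof.
move=> HT; split; first by rewrite F1S (Tr HT).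
have [v Hv] := vl_some Kne T.
have HS : forall w, exists k, up (F1 K T) k (Some w) = Some (Some r).
  move=> w; case: HT => _ /(_ w) [k Hk]; exists k; by rewrite up_F1 Hk.
move=> [w|]; first exact: HS.
have [k Hk] := HS v; exists k.+1; by rewrite upS' F1N Hv.
Qed.

Lemma F1_search T : search_tree g T -> search_tree (gK g K) (F1 K T).
Proof.
move=> HST; have [r [HT HS]] := HST; exists (Some r); split; first exact: F1_rooted.
have [v Hv] := vl_some Kne T.
have [vK dv] := vl_spec Hv.
have HN : st_at (gK g K) (F1 K T) None.
  constructor => [[d|]]; rewrite ?F1S ?F1N; first (case: (T d) => [?|] H; discriminate H).
  rewrite Hv => H; discriminate H.
suff Hall : forall c, st_at (gK g K) (F1 K T) (Some c). exact: Hall.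
elim/(tree_ind HT HS) => c IH.
constructor => [[d|]].
  rewrite F1S; case E: (T d) => [p|] /=; last congruence.
  move=> [Epc]; subst p; split; last exact: IH.
  have CC := comp_child HT HS E.
  apply: (comp_lift1 (S := desc T c :\ c) (C := desc T d) (v := v) _ _ vK _ _ _ _ CC).
  - by move=> y; rewrite !in_setD1 desc_F1S (inj_eq (@Some_inj _)).
  - by move=> y; rewrite desc_F1S.
  - by rewrite (desc_F1N _ Hv).
  - rewrite (desc_F1N _ Hv) in_setD1 (desc_F1N _ Hv) /= => vd.
    exact: desc_trans vd (par_desc E).
  - rewrite (desc_F1N _ Hv) => vd b bS bK.
    case: (eqVneq v b) => [<-//|nvb].
    case: CC => _ _ _ /(_ v b vd bS); apply; exact: cliq.
  - rewrite in_setD1 (desc_F1N _ Hv) (desc_F1N _ Hv) /= => vc a ad aK.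
    case: (eqVneq a v) => [<-//|nav].
    case: (eqVneq v c) => [Evc|nvc].
      subst c; have := below_vl Kne HT Hv aK (desc_trans ad (par_desc E)).
      by move/eqP; rewrite (negbTE nav).
    case: CC => _ _ _ /(_ a v ad); apply; first by rewrite in_setD1 nvc.
    exact: cliq.
rewrite F1N Hv => -[Evc]; subst c; split; last exact: HN.
split.
- by apply/set0Pn; exists None; rewrite desc_F1None.
- apply/subsetP => o; rewrite desc_F1None => /eqP ->.
  by rewrite in_setD1 (desc_F1N _ Hv) desc_refl.
- move=> a b; rewrite !desc_F1None => /eqP -> /eqP ->; exact: connect0.
- move=> a b; rewrite desc_F1None => /eqP ->; case: b => [b|] //=.
  rewrite in_setD1 desc_F1S /= => bv bK.
  move/andP: bv => [nbv bv]. by rewrite (below_vl Kne HT Hv bK bv) eqxx in nbv.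
Qed.

End R1b.

Section R1c.
Variable V : finType.
Variable g : rel V.
Variable K : {set V}.
Hypothesis Kne : K != set0.
Hypothesis cliq : {in K &, forall a b, a != b -> g a b}.
Implicit Types (T : ptree V).

Lemma ex_F1 T r z u v w : rooted_at T r -> vl K T = Some z -> T w = Some v -> T v = Some u ->
  [exists y in desc (F1 K T) (Some w), gK g K (Some u) y] = [exists y in desc T w, g u y].
Proof.
move=> HT Hz Hw Hv; have [zK _] := vl_spec Hz.
apply/existsP/existsP => [[[y|]]|[y]].
- by rewrite desc_F1S => H; exists y.
- rewrite (desc_F1N _ Hz) /= => /andP [zw uK].
  case: (eqVneq u z) => [Euz|nuz]; last by exists z; rewrite zw /=; apply: cliq.
  subst z.
  have wu : w \in desc T u by apply: desc_trans (par_desc Hw) (par_desc Hv).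
  have Ewu := desc_antisym HT wu zw; subst w.
  have := @depth_up _ _ _ HT 1 _ _ Hw; have := @depth_up _ _ _ HT 1 _ _ Hv; lia.
- by move=> H; exists (Some y); rewrite desc_F1S.
Qed.

Lemma rot_F1S T r u v w : rooted_at T r -> T v = Some u ->
  rotate (gK g K) (F1 K T) (Some u) (Some v) (Some w) = omap Some (rotate g T u v w).
Proof.
move=> HT Hv; have [z Hz] := vl_some Kne T.
rewrite /rotate !ffunE /=.
case: (eqVneq w u) => [->|nwu]; first by rewrite !eqxx.
have nwu' : (Some w == Some u) = false by apply/negbTE; rewrite (inj_eq (@Some_inj _)).
rewrite nwu'.
case: (eqVneq w v) => [E|nwv].
  subst w; rewrite eqxx; by case: (T u).
have nwv' : (Some w == Some v) = false by apply/negbTE; rewrite (inj_eq (@Some_inj _)).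
rewrite nwv'.
case E: (T w) => [p|] /=; last by [].
case: (eqVneq p v) => [Epv|npv].
  subst p; have EX := ex_F1 HT Hz E Hv; rewrite /= in EX; rewrite EX eqxx /=.
  by rewrite eqxx /=; case: ifP.
have npv' : (Some p == Some v) = false by apply/negbTE; rewrite (inj_eq (@Some_inj _)).
have npv'' : (Some (Some p) == Some (Some v)) = false by apply/negbTE; rewrite !(inj_eq (@Some_inj _)).
by rewrite npv' npv'' /=.
Qed.

Lemma vl_rot T r u v z : search_tree g T -> rooted_at T r -> T v = Some u ->
  search_tree g (rotate g T u v) -> vl K T = Some z ->
  vl K (rotate g T u v) = Some (if (z == v) && (u \in K) then u else z).
Proof.
move=> HST HT Hv HST2 Hz.
have [zK zall] := vl_prop Kne cliq HST Hz.
set T2 := rotate g T u v.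
apply: (vl_char Kne cliq HST2); first by case: ifP => // /andP [].
move=> a aK; have za := zall a aK.
have nuv := nuv HT Hv.
case: ifP => [/andP [/eqP Ezv uK] | Hn].
  subst z.
  case: (eqVneq a u) => [->|nau]; first exact: desc_refl.
  case: (eqVneq a v) => [->|nav]; first exact: par_desc (R_u g T u v).
  move/mem_desc: za => [[|[|k]] Hk].
  - by move: Hk nav => [->]; rewrite eqxx.
  - by move: Hk nau; rewrite /= Hv => -[->]; rewrite eqxx.
  - exact: desc_trans (par_desc (R_u g T u v)) (anc_v g HT Hv Hk).
case: (eqVneq z v) => [Ezv|nzv].
  subst z; move: Hn; rewrite eqxx /= => uK.
  case: (eqVneq a v) => [->|nav]; first exact: desc_refl.
  move/mem_desc: za => [[|[|k]] Hk].
  - by move: Hk nav => [->]; rewrite eqxx.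
  - by move: Hk aK; rewrite /= Hv => -[<-]; rewrite uK.
  - exact: (anc_v g HT Hv Hk).
case: (boolP (z \in desc T v)) => zv; last first.
  by move/mem_desc: za => [k Hk]; apply: (P1 g HT Hv zv Hk).
have [c Hc zc] := desc_child zv nzv.
move/mem_desc: (za) => [k1 Hk1]; move/mem_desc: (zc) => [k2 Hk2].
case: (leqP k1 k2) => Hk.
  have ac : a \in desc T c by apply/mem_desc; exists (k2 - k1); exact: up_chain Hk1 Hk2 Hk.
  by apply/mem_desc; exists k1; apply: (P2 g HT Hv Hc Hk1 ac).
have Hca := up_chain Hk2 Hk1 (ltnW Hk).
have zc2 : z \in desc T2 c.
  apply/mem_desc; exists k2; exact: (P2 g HT Hv Hc Hk2 (desc_refl T c)).
have dc := @depth_up _ _ _ HT 1 _ _ Hc.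
have dv := dvu HT Hv.
have ncu : c != u by apply/eqP => E; move: dc; rewrite E dv; lia.
have ncv : c != v by apply/eqP => E; move: dc; rewrite E; lia.
have HT2c := R_o g T ncu ncv; rewrite Hc eqxx /= in HT2c.
have cv2 : c \in desc T2 v.
  move: HT2c; case: ifP => _ E.
    exact: desc_trans (par_desc E) (par_desc (R_u g T u v)).
  exact: par_desc E.
move: Hca; case E: (k1 - k2) => [|m]; first by move: Hk; rewrite -subn_gt0 E.
rewrite upS' Hc /=.
case: m {E} => [|[|m]] Hm.
- by move: Hm => [<-]; apply: desc_trans zc2 cv2.
- move: Hm; rewrite /= Hv => -[Eua]; subst a.
  have nzu : u != z.
    apply/eqP => Euz; subst z.
    by move: nuv; rewrite (desc_antisym HT zv (par_desc Hv)) eqxx.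
  have ex : [exists y in desc T c, g u y] by apply/existsP; exists z; rewrite zc /=; apply: cliq.
  rewrite ex in HT2c; exact: desc_trans zc2 (par_desc HT2c).
- exact: desc_trans zc2 (desc_trans cv2 (anc_v g HT Hv Hm)).
Qed.

End R1c.

Lemma omap_Some_inj (V : Type) (a b : option V) : omap Some a = omap Some b -> a = b.
Proof. by case: a; case: b => //= ? ? [->]. Qed.

Section Main.
Variable V : finType.
Variable g : rel V.
Variable K : {set V}.
Hypothesis conn : forall a b, connect g a b.
Hypothesis Kne : K != set0.
Hypothesis cliq : {in K &, forall a b, a != b -> g a b}.
Implicit Types (T : ptree V).

Lemma back0 T1 T2 (u' v' : option V) : F0 T1 v' = Some u' ->
  F0 T2 = rotate (gK g K) (F0 T1) u' v' -> exists u v, T1 v = Some u /\ T2 = rotate g T1 u v.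
Proof.
case: v' => [v|]; last by rewrite F0N.
case: u' => [u|] H E.
  have Hv : T1 v = Some u by move: H; rewrite F0S; case: (T1 v) => // p [->].
  exists u, v; split => //; apply: F0_inj; by rewrite (rot_F0 g K) E.
have := congr1 (fun f : ptree (option V) => f None) E; rewrite /= F0N /rotate ffunE eqxx.
by [].
Qed.

Lemma part0 : induces_copy g (gK g K) (R0 g K).
Proof.
have ins : forall T, search_tree g T -> forall v, insert T 0 v = F0 T.
  by move=> T [r [HT _]] v; apply: F0_insert HT.
split.
  move=> T' [T [HST [v [_ _ ->]]]]; rewrite ins //; exact: F0_search.
exists (@F0 V); split.
- move=> T HST; exists T; split => //.
  have [z Hz] := vl_some Kne T; have [zK dz] := vl_spec Hz.
  by exists z; split => //; rewrite ins.
- by move=> T1 T2 _ _; apply: F0_inj.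
- move=> T' [T [HST [v [_ _ ->]]]]; exists T => //; by rewrite ins.
- move=> T1 T2 H1 H2; split.
    case=> _ _ [u [v [[Hv E]|[Hv E]]]]; (split; [exact: F0_search|exact: F0_search|]);
      exists (Some u), (Some v); [left|right]; rewrite F0S Hv E (rot_F0 g K); by split.
  case=> _ _ [u' [v' [[Hv E]|[Hv E]]]]; split => //.
    have [u [v [Hv' E']]] := back0 Hv E; exists u, v; by left.
  have [u [v [Hv' E']]] := back0 Hv E; exists u, v; by right.
Qed.

Lemma back1 T1 T2 r (u' v' : option V) : rooted_at T1 r -> F1 K T1 v' = Some u' ->
  F1 K T2 = rotate (gK g K) (F1 K T1) u' v' -> exists u v, T1 v = Some u /\ T2 = rotate g T1 u v.
Proof.
move=> HT; case: v' => [v|].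
  rewrite F1S; case Hv: (T1 v) => [u|] //= [<-] E; exists u, v; split => //.
  apply/ffunP => w; apply: omap_Some_inj.
  have := congr1 (fun f : ptree (option V) => f (Some w)) E; rewrite /= F1S => ->.
  exact: (rot_F1S Kne cliq w HT Hv).
rewrite F1N; case Hz: (vl K T1) => [z|] //= [<-] E.
have := congr1 (fun f : ptree (option V) => f (Some z)) E; rewrite /= F1S /rotate ffunE eqxx.
by case: (T2 z).
Qed.

Lemma exN T u : [exists y in desc (F1 K T) None, gK g K (Some u) y] = (u \in K).
Proof.
apply/existsP/idP => [[[y|]]|uK]; rewrite ?desc_F1None //=.
by exists None; rewrite desc_F1None eqxx.
Qed.

Lemma fwd1 T1 T2 u v : search_tree g T1 -> search_tree g T2 -> T1 v = Some u ->
  T2 = rotate g T1 u v -> F1 K T2 = rotate (gK g K) (F1 K T1) (Some u) (Some v).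
Proof.
move=> HS1 HS2 Hv E; have [r [HT _]] := HS1.
apply/ffunP => [[w|]].
  rewrite F1S E; symmetry; exact: (rot_F1S Kne cliq w HT Hv).
have [z Hz] := vl_some Kne T1.
have Hz2 := vl_rot Kne cliq HS1 HT Hv (eq_ind _ _ HS2 _ E) Hz.
have EX := exN T1 u; rewrite /= in EX.
rewrite F1N E Hz2 /rotate ffunE /= EX F1N Hz /=.
case: (eqVneq z v) => [->|nzv] /=; first by rewrite eqxx; case: (u \in K).
have -> : (Some (Some z) == Some (Some v)) = false by apply/negbTE; rewrite !(inj_eq (@Some_inj _)).
by [].
Qed.

Lemma part1 : induces_copy g (gK g K) (R1 g K).
Proof.
have ins : forall T v, search_tree g T -> v \in K -> depth T v = lam K T ->
    insert T (lam K T).+1 v = F1 K T.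
  move=> T v HST vK dv; apply: F1_insert; exact: (vl_unique Kne cliq HST vK dv).
split.
  move=> T' [T [HST [v [vK dv ->]]]]; rewrite ins //; exact: F1_search.
exists (@F1 V K); split.
- move=> T HST; exists T; split => //.
  have [z Hz] := vl_some Kne T; have [zK dz] := vl_spec Hz.
  by exists z; split => //; rewrite ins.
- move=> T1 T2 _ _ E; apply/ffunP => w; apply: omap_Some_inj.
  by rewrite -!(F1S K) E.
- move=> T' [T [HST [v [vK dv ->]]]]; exists T => //; by rewrite ins.
- move=> T1 T2 H1 H2; split.
    case=> _ _ [u [v [[Hv E]|[Hv E]]]]; (split; [exact: F1_search|exact: F1_search|]);
      exists (Some u), (Some v); [left|right]; rewrite F1S Hv; split => //.
      exact: fwd1 E.
    exact: fwd1 E.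
  case=> _ _ [u' [v' [[Hv E]|[Hv E]]]]; split => //.
    have [r [HT _]] := H1.
    have [u [v [Hv' E']]] := back1 HT Hv E; exists u, v; by left.
  have [r [HT _]] := H2.
  have [u [v [Hv' E']]] := back1 HT Hv E; exists u, v; by right.
Qed.

End Main.

Theorem proposition2p6 (V : finType) (g : rel V) (K : {set V}) :
  symmetric g -> irreflexive g ->
  (forall a b, connect g a b) ->
  K != set0 ->
  {in K &, forall a b, a != b -> g a b} ->
  induces_copy g (gK g K) (R0 g K) /\ induces_copy g (gK g K) (R1 g K).
Proof.
move=> _ _ conn Kne cliq; split.
  exact: (part0 conn Kne).
exact: (part1 Kne cliq).
Qed.
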